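(* Let $V$ be a Poisson algebra over $\Bbbk$ with commutative associative product $xy$ and Poisson bracket $[x,y]$, and let $D:V\to V$ be a derivation of $V$ (a linear map that is a derivation of both the product and the bracket). On the free $H$-module $P=H\otimes V$ define $\lambda$-products on $V$ by $$(x_\lambda y)=xy,\qquad [x_\lambda y]=[x,y]+\partial\big(yD(x)\big)+\lambda D(xy),\qquad x,y\in V,$$ extended to all of $P$ by sesquilinearity. Then $P$ is a Poisson conformal algebra.
   Context: $\Bbbk$ is a field of characteristic $0$, $H=\Bbbk[\partial]$. A $\lambda$-product on an $H$-module $C$ is a $\Bbbk$-bilinear map $(x,y)\mapsto(x_\lambda y)=\sum_{n\ge0}\frac{\lambda^n}{n!}(x_{(n)}y)\in C[\lambda]$ satisfying sesquilinearity $(\partial x_\lambda y)=-\lambda(x_\lambda y)$, $(x_\lambda\partial y)=(\partial+\lambda)(x_\lambda y)$; $(x_{-\partial-\lambda}y)$ means $\sum_n\frac{(-\partial-\lambda)^n}{n!}(x_{(n)}y)$ with $\partial$ acting on coefficients. A Poisson conformal algebra is an $H$-module $P$ with two $\lambda$-products $(x_\lambda y)$ and $[x_\lambda y]$ such that: $(\cdot_\lambda\cdot)$ is associative, $(x_\lambda(y_\mu z))=((x_\lambda y)_{\lambda+\mu}z)$, and commutative, $(x_\lambda y)=(y_{-\partial-\lambda}x)$; $[\cdot_\lambda\cdot]$ is skew-symmetric, $[x_\lambda y]=-[y_{-\partial-\lambda}x]$, and satisfies the Jacobi identity $[x_\lambda[y_\mu z]]-[y_\mu[x_\lambda z]]=[[x_\lambda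 y]_{\lambda+\mu}z]$; and the conformal Leibniz rule $[x_\lambda(y_\mu z)]=([x_\lambda y]_{\lambda+\mu}z)+(y_\mu[x_\lambda z])$ holds for all $x,y,z\in P$. *)

(* Defs.v *)
From HB Require Import structures.
From mathcomp Require Import all_boot all_order all_algebra.
Set Implicit Arguments. Unset Strict Implicit. Unset Printing Implicit Defensive.
Import GRing.Theory.
Local Open Scope ring_scope.

(*  Polynomial coefficients live in T3 = K[del][lam][mu] (inner variable =    *)
(*  del = the operator d of H = K[d], middle = lambda, outer = mu).           *)
(*  An element of K[d,lam,mu] (x) V (this contains P = H (x) V, P[lam],       *)
(*  P[lam,mu]) is represented by a formal finite sum  sum_j f_j (x) v_j,      *)
(*  i.e. a  seq (T3 * V); two such sums are equal as tensors iff all their    *)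
(*  coefficient vectors  tcoef s a b c  (coefficient of d^a lam^b mu^c) agree. *)
(*  Elements of P = H (x) V are  seq ({poly K} * V), embedded by [emb].       *)

Section PCA.
Variable K : fieldType.
Variable V : lmodType K.

Definition T3 := {poly {poly {poly K}}}.
Definition vdel : T3 := ('X%:P)%:P.
Definition vlam : T3 := ('X)%:P.
Definition vmu : T3 := 'X.

Definition subst3 (f : T3) (ed el em : T3) : T3 :=
  \sum_(c < size f) \sum_(b < size f`_c) \sum_(a < size f`_c`_b)
     ((f`_c`_b`_a)%:P%:P%:P * em ^+ c * el ^+ b * ed ^+ a).

Definition tens := seq (T3 * V).

Definition tcoef (s : tens) (a b c : nat) : V :=
  \sum_(p <- s) ((p.1)`_c`_b`_a *: p.2).

Definition teq (s t : tens) : Prop := forall a b c, tcoef s a b c = tcoef t a b c.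

Definition tadd (s t : tens) : tens := s ++ t.
Definition topp (s : tens) : tens := [seq (- p.1, p.2) | p <- s].
Definition tscale (k : K) (s : tens) : tens := [seq (p.1, k *: p.2) | p <- s].
Definition tmul (g : T3) (s : tens) : tens := [seq (g * p.1, p.2) | p <- s].
Definition tsubst (s : tens) (ed el em : T3) : tens :=
  [seq (subst3 p.1 ed el em, p.2) | p <- s].
Definition tdel (s : tens) : tens := tmul vdel s.

Definition Pelt := seq ({poly K} * V).
Definition emb (x : Pelt) : tens := [seq ((p.1)%:P%:P, p.2) | p <- x].

(* Extension by sesquilinearity (and K-bilinearity, treating the other      *)
(* formal variables as scalars) of a lambda-product given on V by [base]:   *)
(*  (f(d) a _L g(d) b) = f(-L) g(L+d) (a _L b),  L the spectral parameter.   *)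
Definition lprod (base : T3 -> V -> V -> tens) (L : T3) (s t : tens) : tens :=
  flatten [seq flatten [seq tmul (subst3 p.1 (- L) vlam vmu *
                                  subst3 q.1 (L + vdel) vlam vmu)
                                 (base L p.2 q.2) | q <- t] | p <- s].

(* (x_{-d-lam} y) : substitute lam := -d-lam in (x_lam y) *)
Definition lprod_skew (pr : T3 -> tens -> tens -> tens) (s t : tens) : tens :=
  tsubst (pr vlam s t) vdel (- vdel - vlam) vmu.

Definition cbase (mul : V -> V -> V) (L : T3) (a b : V) : tens := [:: (1, mul a b)].
Definition bbase (mul br : V -> V -> V) (D : V -> V) (L : T3) (a b : V) : tens :=
  [:: (1, br a b); (vdel, mul b (D a)); (L, D (mul a b))].

Definition bilinear_op (m : V -> V -> V) : Prop :=
  (forall (k : K) x y z, m (k *: x + y) z = k *: m x z + m y z) /\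
  (forall (k : K) x y z, m x (k *: y + z) = k *: m x y + m x z).

Definition poisson_algebra (mul br : V -> V -> V) : Prop :=
  bilinear_op mul /\ bilinear_op br /\
  (forall x y z, mul x (mul y z) = mul (mul x y) z) /\
  (forall x y, mul x y = mul y x) /\
  (forall x y, br x y = - br y x) /\
  (forall x y z, br x (br y z) = br (br x y) z + br y (br x z)) /\
  (forall x y z, br x (mul y z) = mul (br x y) z + mul y (br x z)).

Definition poisson_derivation (mul br : V -> V -> V) (D : V -> V) : Prop :=
  [/\ (forall (k : K) x y, D (k *: x + y) = k *: D x + D y),
      (forall x y, D (mul x y) = mul (D x) y + mul x (D y))
    & (forall x y, D (br x y) = br (D x) y + br x (D y))].

Definition is_lambda_product (pr : T3 -> tens -> tens -> tens) : Prop :=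
  [/\ (forall (k : K) (x y z : Pelt),
         teq (pr vlam (tadd (tscale k (emb x)) (emb y)) (emb z))
             (tadd (tscale k (pr vlam (emb x) (emb z))) (pr vlam (emb y) (emb z)))),
      (forall (k : K) (x y z : Pelt),
         teq (pr vlam (emb x) (tadd (tscale k (emb y)) (emb z)))
             (tadd (tscale k (pr vlam (emb x) (emb y))) (pr vlam (emb x) (emb z)))),
      (forall x y : Pelt,
         teq (pr vlam (tdel (emb x)) (emb y)) (tmul (- vlam) (pr vlam (emb x) (emb y))))
    & (forall x y : Pelt,
         teq (pr vlam (emb x) (tdel (emb y)))
             (tmul (vdel + vlam) (pr vlam (emb x) (emb y))))].

Definition poisson_conformal (cp bp : T3 -> tens -> tens -> tens) : Prop :=
  is_lambda_product cp /\ is_lambda_product bp /\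
      (forall x y z : Pelt,
         teq (cp vlam (emb x) (cp vmu (emb y) (emb z)))
             (cp (vlam + vmu) (cp vlam (emb x) (emb y)) (emb z))) /\
      (forall x y : Pelt,
         teq (cp vlam (emb x) (emb y)) (lprod_skew cp (emb y) (emb x))) /\
      (forall x y : Pelt,
         teq (bp vlam (emb x) (emb y)) (topp (lprod_skew bp (emb y) (emb x)))) /\
      (forall x y z : Pelt,
         teq (tadd (bp vlam (emb x) (bp vmu (emb y) (emb z)))
                   (topp (bp vmu (emb y) (bp vlam (emb x) (emb z)))))
             (bp (vlam + vmu) (bp vlam (emb x) (emb y)) (emb z))) /\
      (forall x y z : Pelt,
         teq (bp vlam (emb x) (cp vmu (emb y) (emb z)))
             (tadd (cp (vlam + vmu) (bp vlam (emb x) (emb y)) (emb z))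
                   (cp vmu (emb y) (bp vlam (emb x) (emb z))))).

End PCA.

(* Main.v *)
Require Import Defs.
From HB Require Import structures.
From mathcomp Require Import all_boot all_order all_algebra.
Import GRing.Theory.
Local Open Scope ring_scope.
From mathcomp Require Import ring lra zify.
Set Implicit Arguments. Unset Strict Implicit. Unset Printing Implicit Defensive.

Section Sub.
Variable K : fieldType.
Local Notation T3 := (T3 K).
Local Notation T1 := {poly K}.
Local Notation T2 := {poly {poly K}}.

Definition phi0 : {rmorphism K -> T3} :=
  (@polyC T2 \o (@polyC T1 \o @polyC K))%FUN.

Section Eval.
Variables (ed el em : T3).
Lemma cf0 : commr_rmorph phi0 ed. Proof. by move=> x; rewrite /GRing.comm mulrC. Qed.
Definition psi1 : {rmorphism T1 -> T3} := horner_morph cf0.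
Lemma cf1 : commr_rmorph psi1 el. Proof. by move=> x; rewrite /GRing.comm mulrC. Qed.
Definition psi2 : {rmorphism T2 -> T3} := horner_morph cf1.
Lemma cf2 : commr_rmorph psi2 em. Proof. by move=> x; rewrite /GRing.comm mulrC. Qed.
Definition sub : {rmorphism T3 -> T3} := horner_morph cf2.

Lemma hornerE_wide (R S : nzSemiRingType) (f : {rmorphism R -> S}) u (cfu : commr_rmorph f u) p :
  horner_morph cfu p = \sum_(i < size p) f p`_i * u ^+ i.
Proof.
rewrite /horner_morph (horner_coef_wide _ (size_poly _ _)).
by apply: eq_bigr => i _; rewrite coef_map.
Qed.

Lemma subst3E f : subst3 f ed el em = sub f.
Proof.
rewrite /subst3 /sub /=. rewrite (hornerE_wide cf2); apply: eq_bigr => c _.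
rewrite /psi2 /= (hornerE_wide cf1) mulr_suml; apply: eq_bigr => b _.
rewrite /psi1 /= (hornerE_wide cf0) !mulr_suml; apply: eq_bigr => a _.
rewrite /phi0 /=. ring.
Qed.

Lemma subPC q : sub q%:P = psi2 q. Proof. exact: (horner_morphC cf2). Qed.
Lemma psi2C q : psi2 q%:P = psi1 q. Proof. exact: (horner_morphC cf1). Qed.
Lemma psi1C q : psi1 q%:P = phi0 q. Proof. exact: (horner_morphC cf0). Qed.
Lemma subX : sub 'X = em. Proof. exact: (horner_morphX cf2). Qed.
Lemma psi2X : psi2 'X = el. Proof. exact: (horner_morphX cf1). Qed.
Lemma psi1X : psi1 'X = ed. Proof. exact: (horner_morphX cf0). Qed.
End Eval.
End Sub.

Section Main.
Variable K : fieldType.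
Variable V : lmodType K.
Local Notation T3 := (T3 K).
Local Notation tens := (tens V).
Local Notation vdel := (vdel K).
Local Notation vlam := (vlam K).
Local Notation vmu := (vmu K).

Definition ev (f : {poly K}) (X : T3) : T3 := (map_poly (phi0 K) f).[X].

Lemma subC (ed el em : T3) c : sub ed el em (c%:P%:P%:P) = c%:P%:P%:P.
Proof. by rewrite subPC psi2C psi1C. Qed.
Lemma sub_del (ed el em : T3) : sub ed el em vdel = ed.
Proof. by rewrite subPC psi2C psi1X. Qed.
Lemma sub_lam (ed el em : T3) : sub ed el em vlam = el.
Proof. by rewrite subPC psi2X. Qed.
Lemma sub_mu (ed el em : T3) : sub ed el em vmu = em.
Proof. by rewrite subX. Qed.
Lemma sub_emb (ed el em : T3) (f : {poly K}) : sub ed el em (f%:P%:P) = ev f ed.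
Proof. by rewrite subPC psi2C. Qed.
Lemma sub_ev (ed el em : T3) f X : sub ed el em (ev f X) = ev f (sub ed el em X).
Proof.
rewrite /ev -horner_map -map_poly_comp; congr (_.[_]).
by apply: eq_map_poly => c /=; rewrite subC.
Qed.

Definition sb (ed el em x : T3) : T3 := sub ed el em x.
Lemma sbM (ed el em x y : T3) : sb ed el em (x * y) = sb ed el em x * sb ed el em y.
Proof. exact: rmorphM. Qed.
Lemma sbD (ed el em x y : T3) : sb ed el em (x + y) = sb ed el em x + sb ed el em y.
Proof. exact: rmorphD. Qed.
Lemma sbN (ed el em x : T3) : sb ed el em (- x) = - sb ed el em x.
Proof. exact: rmorphN. Qed.
Lemma sb1 (ed el em : T3) : sb ed el em 1 = 1.
Proof. exact: rmorph1. Qed.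
Lemma sb_del (ed el em : T3) : sb ed el em vdel = ed. Proof. exact: sub_del. Qed.
Lemma sb_lam (ed el em : T3) : sb ed el em vlam = el. Proof. exact: sub_lam. Qed.
Lemma sb_mu (ed el em : T3) : sb ed el em vmu = em. Proof. exact: sub_mu. Qed.
Lemma sb_emb (ed el em : T3) (f : {poly K}) : sb ed el em (f%:P%:P) = ev f ed.
Proof. exact: sub_emb. Qed.
Lemma sb_ev (ed el em : T3) f X : sb ed el em (ev f X) = ev f (sb ed el em X).
Proof. exact: sub_ev. Qed.
Lemma subst3_sb (f ed el em : T3) : subst3 f ed el em = sb ed el em f.
Proof. exact: subst3E. Qed.

Lemma tcoef_nil a b c : tcoef (V:=V) [::] a b c = 0.
Proof. by rewrite /tcoef big_nil. Qed.
Lemma tcoef_cons (p : T3 * V) (s : tens) a b c : tcoef (p :: s) a b c = (p.1)`_c`_b`_a *: p.2 + tcoef s a b c.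
Proof. by rewrite /tcoef big_cons. Qed.
Lemma tcoef_cat (s t : tens) a b c : tcoef (s ++ t) a b c = tcoef s a b c + tcoef t a b c.
Proof. by rewrite /tcoef big_cat. Qed.
Lemma tcoef_flatten (ss : seq tens) a b c :
  tcoef (flatten ss) a b c = \sum_(s <- ss) tcoef s a b c.
Proof. by rewrite /tcoef big_flatten. Qed.
Lemma tcoef_topp (s : tens) a b c : tcoef (topp s) a b c = - tcoef s a b c.
Proof.
rewrite /tcoef /topp big_map -sumrN; apply: eq_bigr => p _ /=.
by rewrite !coefN scaleNr.
Qed.
Lemma tcoef_tscale k (s : tens) a b c : tcoef (tscale k s) a b c = k *: tcoef s a b c.
Proof.
rewrite /tcoef /tscale big_map scaler_sumr; apply: eq_bigr => p _ /=.
by rewrite !scalerA mulrC.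
Qed.

Lemma coef3M (C P : T3) a b c :
  (C * P)`_c`_b`_a = \sum_(k < c.+1) \sum_(j < b.+1) \sum_(i < a.+1)
      C`_k`_j`_i * P`_(c - k)`_(b - j)`_(a - i).
Proof.
rewrite coefM !coef_sum; apply: eq_bigr => k _.
rewrite coefM !coef_sum; apply: eq_bigr => j _.
by rewrite coefM.
Qed.

Lemma tcoef_tmul C (s : tens) a b c : tcoef (tmul C s) a b c =
  \sum_(k < c.+1) \sum_(j < b.+1) \sum_(i < a.+1)
      C`_k`_j`_i *: tcoef s (a - i) (b - j) (c - k).
Proof.
rewrite /tcoef /tmul big_map.
under eq_bigr => p _ do rewrite coef3M scaler_suml.
rewrite exchange_big; apply: eq_bigr => k _ /=.
under eq_bigr => p _ do rewrite scaler_suml.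
rewrite exchange_big; apply: eq_bigr => j _.
under eq_bigr => p _ do rewrite scaler_suml.
rewrite exchange_big; apply: eq_bigr => i _.
by rewrite scaler_sumr; apply: eq_bigr => p _; rewrite scalerA.
Qed.

Lemma teq_tmul C (s t : tens) : teq s t -> teq (tmul C s) (tmul C t).
Proof.
move=> h a b c; rewrite !tcoef_tmul.
apply: eq_bigr => k _; apply: eq_bigr => j _; apply: eq_bigr => i _.
by rewrite h.
Qed.

Lemma tmulA C D (s : tens) : tmul C (tmul D s) = tmul (C * D) s.
Proof. by rewrite /tmul -map_comp; apply: eq_map => p /=; rewrite mulrA. Qed.
Lemma tmul_cat C (s t : tens) : tmul C (s ++ t) = tmul C s ++ tmul C t.
Proof. exact: map_cat. Qed.
Lemma tmul1 (s : tens) : tmul 1 s = s.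
Proof. by rewrite /tmul; elim: s => //= p s ->; rewrite mul1r; case: p. Qed.
Lemma topp_tmul C (s : tens) : topp (tmul C s) = tmul (- C) s.
Proof. by rewrite /topp /tmul -map_comp; apply: eq_map => p /=; rewrite mulNr. Qed.

Definition lp1 (base : T3 -> V -> V -> tens) (L : T3) (p q : T3 * V) : tens :=
  tmul (subst3 p.1 (- L) vlam vmu * subst3 q.1 (L + vdel) vlam vmu) (base L p.2 q.2).

Lemma lprodE (base : T3 -> V -> V -> tens) (L : T3) (s t : tens) :
  lprod base L s t = flatten [seq flatten [seq lp1 base L p q | q <- t] | p <- s].
Proof. by []. Qed.

Lemma tcoef_lprod (base : T3 -> V -> V -> tens) (L : T3) (s t : tens) a b c : tcoef (lprod base L s t) a b c =
  \sum_(p <- s) \sum_(q <- t) tcoef (lp1 base L p q) a b c.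
Proof.
rewrite lprodE tcoef_flatten big_map; apply: eq_bigr => p _.
by rewrite tcoef_flatten big_map.
Qed.

Lemma sum_lprod (base : T3 -> V -> V -> tens) (L : T3) (s t : tens) (G : T3 * V -> V) :
  \sum_(q <- lprod base L s t) G q =
  \sum_(p <- s) \sum_(q' <- t) \sum_(q <- lp1 base L p q') G q.
Proof.
rewrite lprodE big_flatten big_map; apply: eq_bigr => p _.
by rewrite big_flatten big_map.
Qed.

Lemma tcoef_lprod_r (base1 base2 : T3 -> V -> V -> tens) (L M : T3) (s t u : tens) a b c :
  tcoef (lprod base1 L s (lprod base2 M t u)) a b c =
  \sum_(p <- s) \sum_(q <- t) \sum_(r <- u)
     tcoef (lprod base1 L [:: p] (lp1 base2 M q r)) a b c.
Proof.
rewrite tcoef_lprod; apply: eq_bigr => p _.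
rewrite sum_lprod; apply: eq_bigr => q _; apply: eq_bigr => r _.
by rewrite tcoef_lprod big_cons big_nil addr0.
Qed.

Lemma tcoef_lprod_l (base1 base2 : T3 -> V -> V -> tens) (L M : T3) (s t u : tens) a b c :
  tcoef (lprod base1 L (lprod base2 M s t) u) a b c =
  \sum_(p <- s) \sum_(q <- t) \sum_(r <- u)
     tcoef (lprod base1 L (lp1 base2 M p q) [:: r]) a b c.
Proof.
rewrite tcoef_lprod sum_lprod; apply: eq_bigr => p _; apply: eq_bigr => q _.
rewrite exchange_big; apply: eq_bigr => r _.
by rewrite tcoef_lprod; apply: eq_bigr => q' _; rewrite big_cons big_nil addr0.
Qed.

End Main.

Section Main2.
Variable K : fieldType.
Variable V : lmodType K.
Local Notation T3 := (T3 K).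
Local Notation tens := (tens V).
Local Notation vdel := (vdel K).
Local Notation vlam := (vlam K).
Local Notation vmu := (vmu K).
Implicit Types (base : T3 -> V -> V -> tens) (s t : tens).

Lemma tmul_flatten C (ss : seq tens) : tmul C (flatten ss) = flatten [seq tmul C s | s <- ss].
Proof. exact: map_flatten. Qed.

Lemma lprod1E base (L F : T3) (a : V) s : lprod base L [:: (F, a)] s =
  tmul (sb (- L) vlam vmu F)
    (flatten [seq tmul (sb (L + vdel) vlam vmu q.1) (base L a q.2) | q <- s]).
Proof.
rewrite lprodE /= cats0 tmul_flatten -map_comp; congr flatten; apply: eq_map => q /=.
by rewrite /lp1 tmulA !subst3_sb.
Qed.

Lemma lprodE1 base (L G : T3) (c : V) s : lprod base L s [:: (G, c)] =
  tmul (sb (L + vdel) vlam vmu G)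
    (flatten [seq tmul (sb (- L) vlam vmu p.1) (base L p.2 c) | p <- s]).
Proof.
rewrite lprodE tmul_flatten -!map_comp; congr flatten; apply: eq_map => p /=.
by rewrite cats0 /lp1 tmulA mulrC !subst3_sb.
Qed.

Lemma tmulC C1 C2 s : tmul C1 (tmul C2 s) = tmul C2 (tmul C1 s).
Proof. by rewrite !tmulA mulrC. Qed.

Lemma lprod_tmul_r base (L : T3) p C s : lprod base L [:: p] (tmul C s) =
  tmul (sb (L + vdel) vlam vmu C) (lprod base L [:: p] s).
Proof.
case: p => F a; rewrite !lprod1E tmulC; congr tmul.
rewrite tmul_flatten /tmul -!map_comp; congr flatten; apply: eq_map => q /=.
by rewrite -map_comp; apply: eq_map => r /=; rewrite sbM mulrA.
Qed.

Lemma lprod_tmul_l base (L : T3) r C s : lprod base L (tmul C s) [:: r] =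
  tmul (sb (- L) vlam vmu C) (lprod base L s [:: r]).
Proof.
case: r => G c; rewrite !lprodE1 tmulC; congr tmul.
rewrite tmul_flatten /tmul -!map_comp; congr flatten; apply: eq_map => q /=.
by rewrite -map_comp; apply: eq_map => r /=; rewrite sbM mulrA.
Qed.

Lemma topp_tmul' C s : topp (tmul C s) = tmul C (topp s).
Proof. by rewrite /topp /tmul -!map_comp; apply: eq_map => p /=; rewrite mulrN. Qed.

Lemma tsubst_tmul C s ed el em : tsubst (tmul C s) ed el em =
   tmul (sb ed el em C) (tsubst s ed el em).
Proof. by rewrite /tsubst /tmul -!map_comp; apply: eq_map => p /=; rewrite !subst3_sb sbM. Qed.

Lemma lp1E base L F G (a b : V) : lp1 base L (F, a) (G, b) =
   tmul (sb (- L) vlam vmu F * sb (L + vdel) vlam vmu G) (base L a b).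
Proof. by rewrite /lp1 !subst3_sb. Qed.

Lemma tmul_cons C (a : T3) (v : V) s : tmul C ((a, v) :: s) = (C * a, v) :: tmul C s.
Proof. by []. Qed.
Lemma tmul_nil C : tmul C ([::] : tens) = [::]. Proof. by []. Qed.
Lemma topp_cons (a : T3) (v : V) s : topp ((a, v) :: s) = (- a, v) :: topp s.
Proof. by []. Qed.
Lemma topp_nil : topp ([::] : tens) = [::]. Proof. by []. Qed.

Lemma tsubst_cons (a : T3) (v : V) s ed el em :
  tsubst ((a, v) :: s) ed el em = (sb ed el em a, v) :: tsubst s ed el em.
Proof. by rewrite /tsubst /= subst3_sb. Qed.
Lemma tsubst_nil ed el em : tsubst ([::] : tens) ed el em = [::]. Proof. by []. Qed.

Lemma tmul_tscale C k s : tmul C (tscale k s) = tscale k (tmul C s).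
Proof. by rewrite /tmul /tscale -!map_comp. Qed.

Lemma lprod_tmul_lg base (L : T3) C s t : lprod base L (tmul C s) t =
  tmul (sb (- L) vlam vmu C) (lprod base L s t).
Proof.
rewrite !lprodE tmul_flatten -!map_comp; congr flatten; apply: eq_map => p /=.
rewrite tmul_flatten -map_comp; congr flatten; apply: eq_map => q /=.
by rewrite /lp1 tmulA !subst3_sb sbM /= mulrA.
Qed.

Lemma lprod_tmul_rg base (L : T3) C s t : lprod base L s (tmul C t) =
  tmul (sb (L + vdel) vlam vmu C) (lprod base L s t).
Proof.
rewrite !lprodE tmul_flatten -!map_comp; congr flatten; apply: eq_map => p /=.
rewrite tmul_flatten -!map_comp; congr flatten; apply: eq_map => q /=.
by rewrite /lp1 tmulA !subst3_sb sbM /= mulrCA mulrA.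
Qed.

Lemma tcoef_tsubst_lprod base (L : T3) s t ed el em a b c :
  tcoef (tsubst (lprod base L s t) ed el em) a b c =
  \sum_(p <- s) \sum_(q <- t) tcoef (tsubst (lp1 base L p q) ed el em) a b c.
Proof.
rewrite lprodE /tsubst map_flatten tcoef_flatten -map_comp big_map; apply: eq_bigr => p _ /=.
by rewrite map_flatten tcoef_flatten -map_comp big_map.
Qed.

Lemma teq_refl s : teq s s. Proof. by []. Qed.
Lemma teq_sym s t : teq s t -> teq t s. Proof. by move=> h a b c; rewrite h. Qed.
Lemma teq_trans s t u : teq s t -> teq t u -> teq s u.
Proof. by move=> h1 h2 a b c; rewrite h1 h2. Qed.

Lemma teq_tmul2 C1 C2 s t : C1 = C2 -> teq s t -> teq (tmul C1 s) (tmul C2 t).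
Proof. by move=> ->; apply: teq_tmul. Qed.

End Main2.

Section Coefs.
Variable K : fieldType.
Local Notation T3 := (T3 K).
Local Notation vdel := (vdel K).
Local Notation vlam := (vlam K).
Local Notation vmu := (vmu K).

Lemma c3_one a b c : (1 : T3)`_c`_b`_a = if (a == 0) && (b == 0) && (c == 0) then 1 else 0.
Proof.
rewrite coef1; case: (c == 0); rewrite ?andbT ?andbF /= ?coef0 //.
rewrite coef1; case: (b == 0); rewrite ?andbT ?andbF /= ?coef0 //.
by rewrite coef1; case: (a == 0).
Qed.

Lemma c3_del a b c : vdel`_c`_b`_a = if (a == 1) && (b == 0) && (c == 0) then 1 else 0.
Proof.
rewrite /Defs.vdel coefC; case: (c == 0); rewrite ?andbT ?andbF /= ?coef0 //.
rewrite coefC; case: (b == 0); rewrite ?andbT ?andbF /= ?coef0 //.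
by rewrite coefX; case: (a == 1).
Qed.

Lemma c3_lam a b c : vlam`_c`_b`_a = if (a == 0) && (b == 1) && (c == 0) then 1 else 0.
Proof.
rewrite /Defs.vlam coefC; case: (c == 0); rewrite ?andbT ?andbF /= ?coef0 //.
rewrite coefX; case: (b == 1); rewrite ?andbT ?andbF /= ?coef0 //.
by rewrite coef1; case: (a == 0).
Qed.

Lemma c3_mu a b c : vmu`_c`_b`_a = if (a == 0) && (b == 0) && (c == 1) then 1 else 0.
Proof.
rewrite /Defs.vmu coefX; case: (c == 1); rewrite ?andbT ?andbF /= ?coef0 //.
rewrite coef1; case: (b == 0); rewrite ?andbT ?andbF /= ?coef0 //.
by rewrite coef1; case: (a == 0).
Qed.

Lemma c3_delR (P : T3) a b c : (P * vdel)`_c`_b`_a = if a == 0 then 0 else P`_c`_b`_a.-1.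
Proof. by rewrite /Defs.vdel !coefMC coefMX. Qed.
Lemma c3_lamR (P : T3) a b c : (P * vlam)`_c`_b`_a = if b == 0 then 0 else P`_c`_b.-1`_a.
Proof. by rewrite /Defs.vlam !coefMC coefMX; case: (b == 0); rewrite ?coef0. Qed.
Lemma c3_muR (P : T3) a b c : (P * vmu)`_c`_b`_a = if c == 0 then 0 else P`_c.-1`_b`_a.
Proof. by rewrite /Defs.vmu coefMX; case: (c == 0); rewrite ?coef0. Qed.
Lemma c3_delL (P : T3) a b c : (vdel * P)`_c`_b`_a = if a == 0 then 0 else P`_c`_b`_a.-1.
Proof. by rewrite mulrC c3_delR. Qed.
Lemma c3_lamL (P : T3) a b c : (vlam * P)`_c`_b`_a = if b == 0 then 0 else P`_c`_b.-1`_a.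
Proof. by rewrite mulrC c3_lamR. Qed.
Lemma c3_muL (P : T3) a b c : (vmu * P)`_c`_b`_a = if c == 0 then 0 else P`_c.-1`_b`_a.
Proof. by rewrite mulrC c3_muR. Qed.

Lemma c3D (P Q : T3) a b c : (P + Q)`_c`_b`_a = P`_c`_b`_a + Q`_c`_b`_a.
Proof. by rewrite !coefD. Qed.
Lemma c3N (P : T3) a b c : (- P)`_c`_b`_a = - P`_c`_b`_a.
Proof. by rewrite !coefN. Qed.
End Coefs.

Section Reflect.
Variable K : fieldType.
Variable V : lmodType K.
Local Notation T3 := (T3 K).
Local Notation tens := (tens V).

Inductive pexp := P1 | Pd | Pl | Pm | PAdd of pexp & pexp | PMul of pexp & pexp | POpp of pexp.

Fixpoint pint (e : pexp) : T3 :=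
  match e with
  | P1 => 1 | Pd => Defs.vdel K | Pl => Defs.vlam K | Pm => Defs.vmu K
  | PAdd x y => pint x + pint y | PMul x y => pint x * pint y | POpp x => - pint x
  end.

Definition cval (p : nat * nat) : K := p.1%:R - p.2%:R.
Definition cnorm (p : nat * nat) := (p.1 - p.2, p.2 - p.1)%N.
Definition cadd (p q : nat * nat) := cnorm (p.1 + q.1, p.2 + q.2)%N.
Definition copp (p : nat * nat) := (p.2, p.1).
Definition cmul (p q : nat * nat) := cnorm (p.1 * q.1 + p.2 * q.2, p.1 * q.2 + p.2 * q.1)%N.
Definition ind (b : bool) := if b then (1, 0)%N else (0, 0)%N.
Definition csum (n : nat) (F : nat -> nat * nat) :=
  foldr (fun x acc => cadd (F x) acc) (0, 0)%N (iota 0 n).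

Fixpoint pco (e : pexp) : nat -> nat -> nat -> nat * nat :=
  match e with
  | P1 => fun a b c => ind ((a == 0) && (b == 0) && (c == 0))%N
  | Pd => fun a b c => ind ((a == 1) && (b == 0) && (c == 0))%N
  | Pl => fun a b c => ind ((a == 0) && (b == 1) && (c == 0))%N
  | Pm => fun a b c => ind ((a == 0) && (b == 0) && (c == 1))%N
  | PAdd x y => fun a b c => cadd (pco x a b c) (pco y a b c)
  | POpp x => fun a b c => copp (pco x a b c)
  | PMul x y => fun a b c => csum c.+1 (fun k => csum b.+1 (fun j => csum a.+1
       (fun i => cmul (pco x i j k) (pco y (a - i) (b - j) (c - k)))))
  end.

Fixpoint pdeg (e : pexp) : nat :=
  match e with
  | P1 => 0 | Pd | Pl | Pm => 1
  | PAdd x y => maxn (pdeg x) (pdeg y) | PMul x y => pdeg x + pdeg y | POpp x => pdeg x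
  end.

Lemma cvalN p : cval (cnorm p) = cval p.
Proof.
case: p => m n; rewrite /cval /cnorm /=.
case: (leqP m n) => h.
  have -> : (m - n = 0)%N by apply/eqP; rewrite subn_eq0.
  by rewrite natrB // sub0r opprB.
have -> : (n - m = 0)%N by apply/eqP; rewrite subn_eq0 ltnW.
by rewrite natrB ?subr0 // ltnW.
Qed.
Lemma cvalD p q : cval (cadd p q) = cval p + cval q.
Proof. by rewrite /cadd cvalN /cval /= !natrD; ring. Qed.
Lemma cvalO p : cval (copp p) = - cval p.
Proof. by rewrite /cval /=; ring. Qed.
Lemma cvalM p q : cval (cmul p q) = cval p * cval q.
Proof. by rewrite /cmul cvalN /cval /= !natrD !natrM; ring. Qed.
Lemma cval_ind b : cval (ind b) = if b then 1 else 0.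
Proof. by case: b; rewrite /cval /= ?subr0 ?subrr. Qed.
Lemma cval0 : cval (0, 0)%N = 0. Proof. by rewrite /cval subrr. Qed.

Lemma cval_csum n F : cval (csum n F) = \sum_(i < n) cval (F i).
Proof.
rewrite /csum -(big_mkord xpredT (fun i => cval (F i))).
have: forall m, cval (foldr (fun x acc => cadd (F x) acc) (0, 0)%N (iota m n))
     = \sum_(m <= i < m + n) cval (F i).
  elim: n => [|n IH] m; first by rewrite addn0 big_geq // cval0.
  by rewrite /= cvalD IH big_ltn ?addnS ?ltnS ?leq_addr // addSn.
by move=> ->.
Qed.

Lemma psound e a b c : (pint e)`_c`_b`_a = cval (pco e a b c).
Proof.
elim: e a b c => [||||x IHx y IHy|x IHx y IHy|x IHx] a b c /=.
- by rewrite c3_one cval_ind.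
- by rewrite c3_del cval_ind.
- by rewrite c3_lam cval_ind.
- by rewrite c3_mu cval_ind.
- by rewrite c3D cvalD IHx IHy.
- rewrite coef3M cval_csum; apply: eq_bigr => k _.
  rewrite cval_csum; apply: eq_bigr => j _.
  rewrite cval_csum; apply: eq_bigr => i _.
  by rewrite cvalM IHx IHy.
- by rewrite c3N cvalO IHx.
Qed.

Lemma pdeg0 e a b c : (pdeg e < a + b + c)%N -> (pint e)`_c`_b`_a = 0.
Proof.
elim: e a b c => [||||x IHx y IHy|x IHx y IHy|x IHx] a b c /= h.
- rewrite c3_one; case: ifP => // /andP[/andP[/eqP ha /eqP hb] /eqP hc].
  by move: h; rewrite ha hb hc.
- rewrite c3_del; case: ifP => // /andP[/andP[/eqP ha /eqP hb] /eqP hc].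
  by move: h; rewrite ha hb hc.
- rewrite c3_lam; case: ifP => // /andP[/andP[/eqP ha /eqP hb] /eqP hc].
  by move: h; rewrite ha hb hc.
- rewrite c3_mu; case: ifP => // /andP[/andP[/eqP ha /eqP hb] /eqP hc].
  by move: h; rewrite ha hb hc.
- rewrite c3D IHx ?IHy ?addr0 //.
    by apply: leq_ltn_trans h; rewrite leq_maxr.
  by apply: leq_ltn_trans h; rewrite leq_maxl.
- rewrite coef3M; apply: big1 => k _; apply: big1 => j _; apply: big1 => i _.
  case: (leqP (i + j + k) (pdeg x)) => hx; last by rewrite IHx ?mul0r.
  rewrite IHy ?mulr0 //.
  have hi := ltn_ord i; have hj := ltn_ord j; have hk := ltn_ord k.
  lia.
- by rewrite c3N IHx ?oppr0.
Qed.

Definition rmap (s : seq (pexp * V)) : tens := [seq (pint p.1, p.2) | p <- s].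

Fixpoint vrep (n : nat) (v : V) : V := if n is n'.+1 then v + vrep n' v else 0.
Definition zsc (p : nat * nat) (v : V) :=
  match p with
  | (0, 0)%N => 0 | (1, 0)%N => v | (0, 1)%N => - v | (m, n) => vrep m v - vrep n v
  end.
Fixpoint vsum (s : seq (pexp * V)) a b c : V :=
  if s is p :: s' then
    match pco p.1 a b c with
    | (0, 0)%N => vsum s' a b c
    | q => zsc q p.2 + vsum s' a b c
    end
  else 0.

Lemma vrepE n v : vrep n v = v *+ n.
Proof. by elim: n => //= n ->; rewrite mulrS. Qed.

Lemma vsumE s a b c : vsum s a b c = \sum_(p <- s) cval (pco p.1 a b c) *: p.2.
Proof.
elim: s => [|p s IH] /=; first by rewrite big_nil.
have E q v : zsc q v = cval q *: v.
  case: q => m n; rewrite /cval scalerBl !scaler_nat -!vrepE /=.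
  by case: m => [|[|m]]; case: n => [|[|n]] //=; rewrite ?addr0 ?subr0 ?sub0r ?subrr.
rewrite big_cons -IH -E; case: (pco p.1 a b c) => [[|[|m]] [|[|n]]] //.
by rewrite /= add0r.
Qed.
Lemma vsumE_dummy : True.
Proof.
by [].
Qed.

Lemma tcoef_rmap s a b c : tcoef (rmap s) a b c = \sum_(p <- s) cval (pco p.1 a b c) *: p.2.
Proof. by rewrite /tcoef big_map; apply: eq_bigr => p _ /=; rewrite psound. Qed.

Lemma teq_reflect (s t : seq (pexp * V)) (n : nat) :
  all (fun p => pdeg p.1 <= n)%N s -> all (fun p => pdeg p.1 <= n)%N t ->
  (forall a b c, (a + b + c <= n)%N -> vsum s a b c = vsum t a b c) ->
  teq (rmap s) (rmap t).
Proof.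
move=> hs ht h a b c; rewrite !tcoef_rmap.
case: (leqP (a + b + c) n) => H; first by rewrite -!vsumE h.
have Z (u : seq (pexp * V)) : all (fun p => pdeg p.1 <= n)%N u ->
    \sum_(p <- u) cval (pco p.1 a b c) *: p.2 = 0.
  elim: u => [|p u IH] /=; first by rewrite big_nil.
  move=> /andP[hp hu]; rewrite big_cons IH // addr0.
  by rewrite -psound pdeg0 ?scale0r //; apply: leq_ltn_trans H.
by rewrite !Z.
Qed.

End Reflect.

Section Alg.
Variable K : fieldType.
Variable V : lmodType K.
Local Notation T3 := (T3 K).
Local Notation tens := (tens V).
Local Notation vdel := (vdel K).
Local Notation vlam := (vlam K).
Local Notation vmu := (vmu K).
Variables (mul br : V -> V -> V) (D : V -> V).
Hypothesis HP : poisson_algebra mul br.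
Hypothesis HD : poisson_derivation mul br D.

Lemma selfadd (x : V) : x = x + x -> x = 0.
Proof. by move/(congr1 (fun t => t - x)); rewrite subrr addrK. Qed.

Lemma bil_l (m : V -> V -> V) : bilinear_op m ->
  [/\ forall x y z, m (x + y) z = m x z + m y z,
      forall k x z, m (k *: x) z = k *: m x z,
      forall z, m 0 z = 0 & forall x z, m (- x) z = - m x z].
Proof.
case=> [hl _].
have h0 z : m 0 z = 0.
  by have := hl 1 0 0 z; rewrite !scale1r addr0 => /selfadd.
have hZ k x z : m (k *: x) z = k *: m x z by have := hl k x 0 z; rewrite addr0 h0 addr0 => ->.
split; [move=> x y z | exact: hZ | exact: h0 | move=> x z].
  by have := hl 1 x y z; rewrite !scale1r => ->.
by rewrite -scaleN1r hZ scaleN1r.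
Qed.

Lemma bil_r (m : V -> V -> V) : bilinear_op m ->
  [/\ forall x y z, m z (x + y) = m z x + m z y,
      forall k x z, m z (k *: x) = k *: m z x,
      forall z, m z 0 = 0 & forall x z, m z (- x) = - m z x].
Proof.
case=> [_ hl].
have h0 z : m z 0 = 0.
  by have := hl 1 z 0 0; rewrite !scale1r addr0 => /selfadd.
have hZ k x z : m z (k *: x) = k *: m z x by have := hl k z x 0; rewrite addr0 h0 addr0 => ->.
split; [move=> x y z | exact: hZ | exact: h0 | move=> x z].
  by have := hl 1 z x y; rewrite !scale1r => ->.
by rewrite -scaleN1r hZ scaleN1r.
Qed.

Let Hmul := HP.1.
Let Hbr := HP.2.1.
Lemma mulDl x y z : mul (x + y) z = mul x z + mul y z. Proof. by case: (bil_l Hmul). Qed.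
Lemma mulZl k x z : mul (k *: x) z = k *: mul x z. Proof. by case: (bil_l Hmul). Qed.
Lemma mul0l z : mul 0 z = 0. Proof. by case: (bil_l Hmul). Qed.
Lemma mulNl x z : mul (- x) z = - mul x z. Proof. by case: (bil_l Hmul). Qed.
Lemma mulDr x y z : mul z (x + y) = mul z x + mul z y. Proof. by case: (bil_r Hmul). Qed.
Lemma mulZr k x z : mul z (k *: x) = k *: mul z x. Proof. by case: (bil_r Hmul). Qed.
Lemma mul0r z : mul z 0 = 0. Proof. by case: (bil_r Hmul). Qed.
Lemma mulNr x z : mul z (- x) = - mul z x. Proof. by case: (bil_r Hmul). Qed.
Lemma brDl x y z : br (x + y) z = br x z + br y z. Proof. by case: (bil_l Hbr). Qed.
Lemma brZl k x z : br (k *: x) z = k *: br x z. Proof. by case: (bil_l Hbr). Qed.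
Lemma br0l z : br 0 z = 0. Proof. by case: (bil_l Hbr). Qed.
Lemma brNl x z : br (- x) z = - br x z. Proof. by case: (bil_l Hbr). Qed.
Lemma brDr x y z : br z (x + y) = br z x + br z y. Proof. by case: (bil_r Hbr). Qed.
Lemma brZr k x z : br z (k *: x) = k *: br z x. Proof. by case: (bil_r Hbr). Qed.
Lemma br0r z : br z 0 = 0. Proof. by case: (bil_r Hbr). Qed.
Lemma brNr x z : br z (- x) = - br z x. Proof. by case: (bil_r Hbr). Qed.
Lemma mulA x y z : mul x (mul y z) = mul (mul x y) z. Proof. by case: HP => _ [_ [h _]]. Qed.
Lemma mulC x y : mul x y = mul y x. Proof. by case: HP => _ [_ [_ [h _]]]. Qed.
Lemma brC x y : br x y = - br y x. Proof. by case: HP => _ [_ [_ [_ [h _]]]]. Qed.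
Lemma jacobi x y z : br x (br y z) = br (br x y) z + br y (br x z).
Proof. by case: HP => _ [_ [_ [_ [_ [h _]]]]]. Qed.
Lemma leibr x y z : br x (mul y z) = mul (br x y) z + mul y (br x z).
Proof. by case: HP => _ [_ [_ [_ [_ [_ h]]]]]. Qed.
Lemma leibl x y z : br (mul x y) z = mul x (br y z) + mul (br x z) y.
Proof. by rewrite brC leibr opprD addrC -mulNr -mulNl -!brC. Qed.
Lemma DD x y : D (x + y) = D x + D y. Proof. by case: HD => h _ _; have := h 1 x y; rewrite !scale1r => ->. Qed.
Lemma D0 : D 0 = 0.
Proof. by case: HD => h _ _; have := h 1 0 0; rewrite !scale1r addr0 => /selfadd. Qed.
Lemma DZ k x : D (k *: x) = k *: D x.
Proof. by case: HD => h _ _; have := h k x 0; rewrite addr0 D0 addr0 => ->. Qed.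
Lemma DN x : D (- x) = - D x. Proof. by rewrite -scaleN1r DZ scaleN1r. Qed.
Lemma Dmul x y : D (mul x y) = mul (D x) y + mul x (D y). Proof. by case: HD. Qed.
Lemma Dbr x y : D (br x y) = br (D x) y + br x (D y). Proof. by case: HD. Qed.



Definition U := (K * V)%type.
HB.instance Definition _ := GRing.Zmodule.on U.
Lemma uaddE (p q : U) : p + q = (p.1 + q.1, p.2 + q.2). Proof. by []. Qed.
Definition uone : U := (1, 0).
Definition umul (p q : U) : U := (p.1 * q.1, p.1 *: q.2 + q.1 *: p.2 + mul p.2 q.2).

Lemma umulA : associative umul.
Proof.
move=> [a u] [b v] [c w]; rewrite /umul /=; congr pair; first by rewrite mulrA.
rewrite !scalerDr !scalerA !mulDl !mulDr !mulZl !mulZr mulA.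
rewrite (mulrC c a) (mulrC c b) !addrA -!addrA.
congr (_ + (_ + _)); rewrite addrCA; congr (_ + _).
rewrite [RHS]addrCA; congr (_ + _); exact: addrCA.
Qed.
Lemma umulC : commutative umul.
Proof. by move=> [a u] [b v]; rewrite /umul /= mulrC mulC [X in X + _]addrC. Qed.
Lemma umul1 : left_id uone umul.
Proof. by move=> [a u]; rewrite /umul /= mul1r scale1r scaler0 mul0l !addr0. Qed.
Lemma umulDl : left_distributive umul +%R.
Proof.
move=> [a u] [b v] [c w]; rewrite /umul !uaddE; cbn [fst snd]; congr pair; first by rewrite mulrDl.
rewrite scalerDl scalerDr mulDl !addrA -!addrA; congr (_ + _).
rewrite addrCA; congr (_ + _); rewrite [RHS]addrCA; congr (_ + _); exact: addrCA.
Qed.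
Lemma uone_neq0 : uone != 0.
Proof. by apply/eqP => [[]] /eqP; rewrite oner_eq0. Qed.
HB.instance Definition _ := GRing.Zmodule_isComNzRing.Build U umulA umulC umul1 umulDl uone_neq0.

Definition io (v : V) : U := (0, v).
Lemma ioM u v : io (mul u v) = io u * io v.
Proof. by rewrite /io /GRing.mul /= /umul /= GRing.mul0r !scale0r !add0r. Qed.
Lemma ioD u v : io (u + v) = io u + io v.
Proof. by rewrite /io uaddE /= addr0. Qed.
Lemma io0 : io 0 = 0. Proof. by []. Qed.
Lemma ioN u : io (- u) = - io u.
Proof. by apply/eqP; rewrite -subr_eq0 opprK -ioD addNr. Qed.
Lemma io_inj : injective io. Proof. by move=> a b []. Qed.

Ltac vexp := rewrite ?(Dmul, Dbr, DD, DN, D0, leibr, leibl, brDl, brDr, brNl, brNr,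
   br0l, br0r, mulDl, mulDr, mulNl, mulNr, mul0l, mul0r).
Ltac keyof t x y z := lazymatch t with
 | x => constr:(0%N) | y => constr:(10%N) | z => constr:(20%N)
 | D ?u => let k := keyof u x y z in constr:(S k)
 | _ => constr:(100%N) end.
Ltac orient x y z := repeat match goal with |- context [br ?u ?v] =>
  let ku := keyof u x y z in let kv := keyof v x y z in
  let b := eval compute in (Nat.ltb kv ku && Nat.ltb ku 100) in
  lazymatch b with true => rewrite (brC u v) end end.
Ltac vring := apply: io_inj; rewrite ?(ioD, ioN, io0, ioM); ring.

Local Notation bb := (bbase mul br D).
Local Notation cb := (cbase mul).

Lemma jac_shape (C A B A' B' A'' B'' : T3) (X1 X2 X3 : tens) :
  A * B = C -> A' * B' = C -> A'' * B'' = C -> teq (X1 ++ topp X2) X3 ->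
  teq (tadd (tmul A (tmul B X1)) (topp (tmul A' (tmul B' X2)))) (tmul A'' (tmul B'' X3)).
Proof.
move=> e1 e2 e3 h; rewrite !tmulA e1 e2 e3 topp_tmul' /tadd -tmul_cat.
exact: teq_tmul.
Qed.

Lemma ev_eq f (X Y : T3) : X = Y -> ev f X = ev f Y. Proof. by move->. Qed.

Ltac evfix := repeat match goal with
 | |- context [ev ?f ?X] => match goal with |- context [ev f ?Y] =>
      tryif constr_eq X Y then fail else (rewrite (@ev_eq f X Y); last by ring) end end.

Ltac side := rewrite ?sbM ?sb_emb ?sb_ev ?sbN ?sbD ?sb_lam ?sb_mu ?sb_del; evfix; ring.
Ltac lcomp := rewrite /bbase /cbase;
  rewrite ?tsubst_cons ?tsubst_nil;
  rewrite ?(tmul_cons, tmul_nil, cat_cons, cat0s, topp_cons, topp_nil);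
  rewrite ?sbD ?sbN ?sb_del ?sb_lam ?sb_mu ?sb1.


Lemma shape2 (C A B A' B' : T3) (X Y : tens) :
  A * B = C -> A' * B' = C -> teq X Y -> teq (tmul A (tmul B X)) (tmul A' (tmul B' Y)).
Proof. by move=> e1 e2 h; rewrite !tmulA e1 e2; exact: teq_tmul. Qed.

Lemma shapeL (C A B A' B' A'' B'' : T3) (X Y1 Y2 : tens) :
  A * B = C -> A' * B' = C -> A'' * B'' = C -> teq X (Y1 ++ Y2) ->
  teq (tmul A (tmul B X)) (tadd (tmul A' (tmul B' Y1)) (tmul A'' (tmul B'' Y2))).
Proof.
move=> e1 e2 e3 h; rewrite !tmulA e1 e2 e3 /tadd -tmul_cat.
exact: teq_tmul.
Qed.

Opaque subst3 sub sb ev Defs.vdel Defs.vlam Defs.vmu.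

Ltac reifyP t := lazymatch t with
 | @GRing.one _ => constr:(P1)
 | Defs.vdel _ => constr:(Pd)
 | Defs.vlam _ => constr:(Pl)
 | Defs.vmu _ => constr:(Pm)
 | ?a + ?b => let x := reifyP a in let y := reifyP b in constr:(PAdd x y)
 | ?a * ?b => let x := reifyP a in let y := reifyP b in constr:(PMul x y)
 | - ?a => let x := reifyP a in constr:(POpp x)
 | fst (?a, _) => reifyP a
 end.
Ltac cleanV v := lazymatch v with snd (_, ?w) => w | _ => v end.
Ltac reifyL l := lazymatch l with
 | nil => constr:(@nil (pexp * V))
 | cons (?c, ?v) ?r => let e := reifyP c in let r' := reifyL r in let w := cleanV v in
     constr:(cons (e, w) r')
 end.
Ltac treflect := lazymatch goal with |- teq ?l1 ?l2 =>
  let s := reifyL l1 in let t := reifyL l2 in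
  change (teq (rmap s) (rmap t)); apply: (@teq_reflect _ _ s t 2); [by []|by []|] end.
Ltac tsplit := let a := fresh "a" in let b := fresh "b" in let c := fresh "c" in
  let H := fresh "H" in intros a b c H;
  destruct a as [|[|[|a]]]; destruct b as [|[|[|b]]]; destruct c as [|[|[|c]]];
  try (exfalso; clear -H; lia); cbv -[GRing.add GRing.opp GRing.zero];
  rewrite ?(addr0, add0r, subr0, sub0r, opprK, opprD).

Ltac finish x y z := lcomp; treflect; tsplit; vexp; orient x y z; try vring.

Lemma lprod_in_bb_r (base : T3 -> V -> V -> tens) (L M F : T3) (a y z : V) :
  sb (L + vdel) vlam vmu M = M ->
  lprod base L [:: (F, a)] (bb M y z) = tmul (sb (- L) vlam vmu F)
    (tmul 1 (base L a (br y z)) ++ tmul (L + vdel) (base L a (mul z (D y)))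
       ++ tmul M (base L a (D (mul y z))) ++ [::]).
Proof.
move=> HM; rewrite lprod1E; congr tmul; cbn [bbase map flatten foldr fst snd].
by congr (tmul _ _ ++ (tmul _ _ ++ (tmul _ _ ++ _))); [exact: sb1 | exact: sb_del | exact: HM].
Qed.

Lemma lprod_in_bb_l (base : T3 -> V -> V -> tens) (L M G : T3) (c x y : V) :
  sb (- L) vlam vmu M = M ->
  lprod base L (bb M x y) [:: (G, c)] = tmul (sb (L + vdel) vlam vmu G)
    (tmul 1 (base L (br x y) c) ++ tmul (- L) (base L (mul y (D x)) c)
       ++ tmul M (base L (D (mul x y)) c) ++ [::]).
Proof.
move=> HM; rewrite lprodE1; congr tmul; cbn [bbase map flatten foldr fst snd].
by congr (tmul _ _ ++ (tmul _ _ ++ (tmul _ _ ++ _))); [exact: sb1 | exact: sb_del | exact: HM].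
Qed.

Lemma lprod_in_cb_r (base : T3 -> V -> V -> tens) (L M F : T3) (a y z : V) :
  lprod base L [:: (F, a)] (cb M y z) = tmul (sb (- L) vlam vmu F)
    (tmul 1 (base L a (mul y z)) ++ [::]).
Proof.
by rewrite lprod1E; congr tmul; cbn [cbase map flatten foldr fst snd]; congr (tmul _ _ ++ _); exact: sb1.
Qed.

Lemma lprod_in_cb_l (base : T3 -> V -> V -> tens) (L M G : T3) (c x y : V) :
  lprod base L (cb M x y) [:: (G, c)] = tmul (sb (L + vdel) vlam vmu G)
    (tmul 1 (base L (mul x y) c) ++ [::]).
Proof.
by rewrite lprodE1; congr tmul; cbn [cbase map flatten foldr fst snd]; congr (tmul _ _ ++ _); exact: sb1.
Qed.

Lemma jac1 (f g h : {poly K}) (x y z : V) :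
  teq (tadd (lprod bb vlam [:: (f%:P%:P, x)] (lp1 bb vmu (g%:P%:P, y) (h%:P%:P, z)))
            (topp (lprod bb vmu [:: (g%:P%:P, y)] (lp1 bb vlam (f%:P%:P, x) (h%:P%:P, z)))))
      (lprod bb (vlam + vmu) (lp1 bb vlam (f%:P%:P, x) (g%:P%:P, y)) [:: (h%:P%:P, z)]).
Proof.
rewrite !lp1E lprod_tmul_r lprod_tmul_r lprod_tmul_l lprod_in_bb_r ?sb_mu //.
rewrite lprod_in_bb_r ?sb_lam // lprod_in_bb_l ?sb_lam //.
apply: (jac_shape (C := ev f (- vlam) * ev g (- vmu) * ev h (vlam + vmu + vdel))).
1-3: side.
finish x y z.
by rewrite jacobi; vring.
Qed.

Lemma assoc1 (f g h : {poly K}) (x y z : V) :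
  teq (lprod cb vlam [:: (f%:P%:P, x)] (lp1 cb vmu (g%:P%:P, y) (h%:P%:P, z)))
      (lprod cb (vlam + vmu) (lp1 cb vlam (f%:P%:P, x) (g%:P%:P, y)) [:: (h%:P%:P, z)]).
Proof.
rewrite !lp1E lprod_tmul_r lprod_tmul_l lprod_in_cb_r lprod_in_cb_l.
apply: (shape2 (C := ev f (- vlam) * ev g (- vmu) * ev h (vlam + vmu + vdel))).
1-2: side.
finish x y z.
Qed.

Lemma comm1 (f g : {poly K}) (x y : V) :
  teq (lp1 cb vlam (f%:P%:P, x) (g%:P%:P, y))
      (tsubst (lp1 cb vlam (g%:P%:P, y) (f%:P%:P, x)) vdel (- vdel - vlam) vmu).
Proof.
rewrite !lp1E tsubst_tmul; apply: teq_tmul2; first by side.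
finish x y y.
Qed.

Lemma skew1 (f g : {poly K}) (x y : V) :
  teq (lp1 bb vlam (f%:P%:P, x) (g%:P%:P, y))
      (topp (tsubst (lp1 bb vlam (g%:P%:P, y) (f%:P%:P, x)) vdel (- vdel - vlam) vmu)).
Proof.
rewrite !lp1E tsubst_tmul topp_tmul'; apply: teq_tmul2; first by side.
finish x y y.
Qed.

Lemma leib1 (f g h : {poly K}) (x y z : V) :
  teq (lprod bb vlam [:: (f%:P%:P, x)] (lp1 cb vmu (g%:P%:P, y) (h%:P%:P, z)))
      (tadd (lprod cb (vlam + vmu) (lp1 bb vlam (f%:P%:P, x) (g%:P%:P, y)) [:: (h%:P%:P, z)])
            (lprod cb vmu [:: (g%:P%:P, y)] (lp1 bb vlam (f%:P%:P, x) (h%:P%:P, z)))).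
Proof.
rewrite !lp1E lprod_tmul_r lprod_tmul_l lprod_tmul_r lprod_in_cb_r.
rewrite lprod_in_bb_l ?sb_lam // lprod_in_bb_r ?sb_lam //.
apply: (shapeL (C := ev f (- vlam) * ev g (- vmu) * ev h (vlam + vmu + vdel))).
1-3: side.
finish x y z.
Qed.


Local Notation Pelt := (Pelt V).
Local Notation emb := (@emb K V).

Lemma cbZl L k a b : cb L (k *: a) b = tscale k (cb L a b).
Proof. by rewrite /cbase /tscale /= mulZl. Qed.
Lemma cbZr L k a b : cb L a (k *: b) = tscale k (cb L a b).
Proof. by rewrite /cbase /tscale /= mulZr. Qed.
Lemma bbZl L k a b : bb L (k *: a) b = tscale k (bb L a b).
Proof. by rewrite /bbase /tscale /= brZl DZ mulZr mulZl DZ. Qed.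
Lemma bbZr L k a b : bb L a (k *: b) = tscale k (bb L a b).
Proof. by rewrite /bbase /tscale /= brZr mulZl mulZr DZ. Qed.

Lemma lambda_gen (base : T3 -> V -> V -> tens) :
  (forall L k a b, base L (k *: a) b = tscale k (base L a b)) ->
  (forall L k a b, base L a (k *: b) = tscale k (base L a b)) ->
  is_lambda_product (lprod base).
Proof.
move=> HZl HZr; split.
- move=> k x y z a b c; rewrite tcoef_cat tcoef_tscale !tcoef_lprod /tadd big_cat /=.
  congr (_ + _); rewrite /tscale big_map scaler_sumr; apply: eq_bigr => p _.
  rewrite scaler_sumr; apply: eq_bigr => q _.
  by rewrite /lp1 /= HZl tmul_tscale tcoef_tscale.
- move=> k x y z a b c; rewrite tcoef_cat tcoef_tscale !tcoef_lprod /tadd.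
  rewrite scaler_sumr -big_split; apply: eq_bigr => p _ /=.
  rewrite big_cat /= scaler_sumr; congr (_ + _).
  rewrite /tscale big_map; apply: eq_bigr => q _.
  by rewrite /lp1 /= HZr tmul_tscale tcoef_tscale.
- by move=> x y; rewrite /tdel lprod_tmul_lg sb_del.
- move=> x y; rewrite /tdel lprod_tmul_rg sb_del.
  by have -> : vdel + vlam = vlam + vdel by rewrite addrC.
Qed.

Lemma sum3B (I J L : Type) (s : seq I) (t : seq J) (u : seq L) (F G : I -> J -> L -> V) :
  \sum_(i <- s) \sum_(j <- t) \sum_(l <- u) F i j l -
  \sum_(i <- s) \sum_(j <- t) \sum_(l <- u) G i j l =
  \sum_(i <- s) \sum_(j <- t) \sum_(l <- u) (F i j l - G i j l).
Proof.
rewrite -sumrB; apply: eq_bigr => i _; rewrite -sumrB; apply: eq_bigr => j _.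
by rewrite -sumrB.
Qed.
Lemma sum3D (I J L : Type) (s : seq I) (t : seq J) (u : seq L) (F G : I -> J -> L -> V) :
  \sum_(i <- s) \sum_(j <- t) \sum_(l <- u) F i j l +
  \sum_(i <- s) \sum_(j <- t) \sum_(l <- u) G i j l =
  \sum_(i <- s) \sum_(j <- t) \sum_(l <- u) (F i j l + G i j l).
Proof.
rewrite -big_split; apply: eq_bigr => i _; rewrite -big_split; apply: eq_bigr => j _.
by rewrite -big_split.
Qed.

Lemma sum_emb2 (F : T3 * V -> T3 * V -> V) (x y : Pelt) :
  \sum_(p <- emb x) \sum_(q <- emb y) F p q =
  \sum_(p <- x) \sum_(q <- y) F (p.1%:P%:P, p.2) (q.1%:P%:P, q.2).
Proof. by rewrite big_map; apply: eq_bigr => p _; rewrite big_map. Qed.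
Lemma sum_emb3 (F : T3 * V -> T3 * V -> T3 * V -> V) (x y z : Pelt) :
  \sum_(p <- emb x) \sum_(q <- emb y) \sum_(r <- emb z) F p q r =
  \sum_(p <- x) \sum_(q <- y) \sum_(r <- z) F (p.1%:P%:P, p.2) (q.1%:P%:P, q.2) (r.1%:P%:P, r.2).
Proof.
rewrite big_map; apply: eq_bigr => p _; rewrite big_map; apply: eq_bigr => q _.
by rewrite big_map.
Qed.

Lemma pcf : poisson_conformal (lprod cb) (lprod bb).
Proof.
split; first by apply: lambda_gen; [exact: cbZl | exact: cbZr].
split; first by apply: lambda_gen; [exact: bbZl | exact: bbZr].
split.
  move=> x y z a b c; rewrite tcoef_lprod_r tcoef_lprod_l !sum_emb3.
  apply: eq_bigr => p _; apply: eq_bigr => q _; apply: eq_bigr => r _.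
  exact: (assoc1 _ _ _ _ _ _ a b c).
split.
  move=> x y a b c; rewrite /lprod_skew tcoef_lprod tcoef_tsubst_lprod !sum_emb2.
  rewrite exchange_big; apply: eq_bigr => p _; apply: eq_bigr => q _.
  exact: (comm1 _ _ _ _ a b c).
split.
  move=> x y a b c; rewrite /lprod_skew tcoef_topp tcoef_tsubst_lprod tcoef_lprod !sum_emb2.
  rewrite exchange_big -sumrN; apply: eq_bigr => p _; rewrite -sumrN.
  apply: eq_bigr => q _; rewrite -tcoef_topp.
  exact: (skew1 _ _ _ _ a b c).
split.
  move=> x y z a b c; rewrite tcoef_cat tcoef_topp !tcoef_lprod_r tcoef_lprod_l !sum_emb3.
  rewrite [X in _ - X]exchange_big sum3B; apply: eq_bigr => p _.
  apply: eq_bigr => q _; apply: eq_bigr => r _.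
  by have := jac1 p.1 q.1 r.1 p.2 q.2 r.2 a b c; rewrite tcoef_cat tcoef_topp.
move=> x y z a b c; rewrite tcoef_cat !tcoef_lprod_r tcoef_lprod_l !sum_emb3.
rewrite [X in _ = _ + X]exchange_big sum3D; apply: eq_bigr => p _.
apply: eq_bigr => q _; apply: eq_bigr => r _.
by have := leib1 p.1 q.1 r.1 p.2 q.2 r.2 a b c; rewrite /tadd tcoef_cat.
Qed.

End Alg.

Unset Implicit Arguments.

Theorem mainTheorem3 (K : fieldType) (V : lmodType K)
    (mul br : V -> V -> V) (D : V -> V) :
  [pchar K] =i pred0 ->
  poisson_algebra mul br ->
  poisson_derivation mul br D ->
  poisson_conformal (lprod (cbase mul)) (lprod (bbase mul br D)).
Proof.
move=> _ HP HD; exact: (pcf HP HD).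
Qed.
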